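(* Let $X$ be as in the standing setting with skeleton $X_1,\dots,X_k$, where the elements of $X_i$ are scaled (by positive factors) so that $\sum_{e\in X_i}e=0$. Suppose some $x\in X$ lies in no $\operatorname{span}X_l$ and $x\in\operatorname{pos}\{x_i,x_j\}$ with $x_i\in X_i$, $x_j\in X_j$, $i\ne j$. Then every $y\in X\cap\operatorname{span}X_i$ is a positive multiple of $\sum_{e\in S_y}e$. Moreover, for any $p,q\in X\cap\operatorname{span}X_i$, the supports $S_p,S_q$ are either disjoint or one is a subset of the other.
   Context: Standing setting: $X\subset\mathbb R^n\setminus\{0\}$ is a finite set such that $0$ lies in the interior of $\operatorname{conv}X$, no element of $X$ is a positive multiple of another, and every $n+1$ points of $X$ are in good position; elements of $X$ represent directions, so each may be replaced by a positive multiple without affecting these hypotheses. A finite set $A$ is in conical position if $0\notin\operatorname{conv}A$ and no point of $A$ lies in the positive hull (set of nonnegative linear combinations, denoted $\operatorname{pos}$) of the other points; it is in good position otherwise. A skeleton of $X$ is a collection of pairwise disjoint subsets $X_1,\dots,X_k\subseteq X$ such that each $X_i$ is the vertex set of a simplex whose relative interior contains $0$ and $\mathbb R^n=\operatorname{span}X_1\oplus\cdots\oplus\operatorname{span}X_k$. For a nonzero $y\in\operatorname{span}X_i$, its support $S_y$ is the minimal subset of $X_i$ whose positive hull contains $y$. *)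

(* Defs.v *)
From HB Require Import structures.
From mathcomp Require Import all_boot all_order all_algebra.
From mathcomp Require Import finmap.
From mathcomp Require Import all_classical all_reals all_analysis.

Set Implicit Arguments.
Unset Strict Implicit.
Unset Printing Implicit Defensive.

Import Order.TTheory GRing.Theory Num.Theory.
Import numFieldTopology.Exports numFieldNormedType.Exports.
Local Open Scope ring_scope.
Local Open Scope fset_scope.

Section Defs.
Variables (R : realType) (n : nat).
Local Notation V := 'rV[R]_n.

Definition conv (A : {fset V}) : set V :=
  fun v => exists w : V -> R,
    (forall a, a \in A -> 0 <= w a) /\ \sum_(a <- A) w a = 1 /\
    v = \sum_(a <- A) w a *: a.

Definition pos (A : {fset V}) : set V :=
  fun v => exists w : V -> R,
    (forall a, a \in A -> 0 <= w a) /\ v = \sum_(a <- A) w a *: a.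

Definition conical_position (A : {fset V}) : Prop :=
  ~ conv A 0 /\ (forall a, a \in A -> ~ pos (A `\ a) a).

Definition good_position (A : {fset V}) : Prop := ~ conical_position A.

Definition standing_setting (X : {fset V}) : Prop :=
  [/\ (0 : V) \notin X,
      interior (conv X) 0,
      (forall x y, x \in X -> y \in X -> x != y -> forall c : R, 0 < c -> x != c *: y)
    & (forall A : {fset V}, A `<=` X -> #|` A| = n.+1 -> good_position A)].

(* A is the vertex set of a simplex (affinely independent) whose relative
   interior (= points with all barycentric coordinates > 0) contains 0 *)
Definition affinely_independent (A : {fset V}) : Prop :=
  forall w : V -> R, \sum_(a <- A) w a = 0 -> \sum_(a <- A) w a *: a = 0 ->
    forall a, a \in A -> w a = 0.

Definition simplex_with_zero_in_relint (A : {fset V}) : Prop :=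
  affinely_independent A /\
  exists w : V -> R, (forall a, a \in A -> 0 < w a) /\
    \sum_(a <- A) w a = 1 /\ \sum_(a <- A) w a *: a = 0.

Definition skeleton (X : {fset V}) (k : nat) (Xs : 'I_k -> {fset V}) : Prop :=
  [/\ (forall i, Xs i `<=` X),
      (forall i j, i != j -> [disjoint Xs i & Xs j]),
      (forall i, simplex_with_zero_in_relint (Xs i)),
      (\sum_(i < k) <<Xs i>>)%VS = fullv
    & directv (\sum_(i < k) <<Xs i>>)%VS].

Definition is_support (Xi : {fset V}) (y : V) (S : {fset V}) : Prop :=
  [/\ S `<=` Xi, pos S y & forall T : {fset V}, T `<` S -> ~ pos T y].

End Defs.

(* Main.v *)
Require Import Defs.
From HB Require Import structures.
From mathcomp Require Import all_boot all_order all_algebra.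
From mathcomp Require Import finmap.
From mathcomp Require Import all_classical all_reals all_analysis.
From mathcomp Require Import ring.
Set Implicit Arguments.
Unset Strict Implicit.
Unset Printing Implicit Defensive.
Import Order.TTheory GRing.Theory Num.Theory.
Import numFieldTopology.Exports numFieldNormedType.Exports.

Local Open Scope ring_scope.

Section Gen.
Variables (K : fieldType) (vT : vectType K).

Lemma rel0 (X : seq vT) (mu : vT -> K) : free X ->
  \sum_(x <- X) mu x *: x = 0 -> forall x, x \in X -> mu x = 0.
Proof.
move=> fX H x xX.
have [k _ uk] := free_span fX (mem0v <<X>>%VS).
have h1 := uk mu (esym H).
have h2 : {in X, (fun=> 0) =1 k}.
  by apply: uk; rewrite big1 // => y _; rewrite scale0r.
by rewrite (h1 x xX) -(h2 x xX).
Qed.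

Lemma free_rel (X : seq vT) : uniq X ->
  (forall mu : vT -> K, \sum_(x <- X) mu x *: x = 0 -> forall x, x \in X -> mu x = 0) ->
  free X.
Proof.
move=> uX H; rewrite -[X]in_tupleE; apply/freeP => k hk i.
pose mu x := oapp k 0 (insub (index x X)).
have muE (j : 'I_(size X)) : mu X`_j = k j.
  by rewrite /mu index_uniq // valK.
have : \sum_(x <- X) mu x *: x = 0.
  rewrite (big_nth 0) big_mkord -[RHS]hk; apply: eq_bigr => j _; by rewrite muE.
move/H => /(_ X`_i (mem_nth _ (ltn_ord i))); by rewrite muE.
Qed.

Lemma extend_free (s D : seq vT) : free D -> exists C : seq vT,
  [/\ {subset C <= s}, free (D ++ C), {subset s <= <<D ++ C>>%VS}
    & forall c, c \in C -> c \notin <<D>>%VS].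
Proof.
elim: s D => [|a s IH] D fD.
  by exists [::]; split => //; rewrite cats0.
have [aD|naD] := boolP (a \in <<D>>%VS).
  have [C [C1 C2 C3 C4]] := IH D fD.
  exists C; split => //.
    by move=> c /C1 cs; rewrite inE cs orbT.
  move=> v; rewrite inE => /orP[/eqP->|/C3//].
  by apply: (subvP (sub_span _)) aD => w wD; rewrite mem_cat wD.
have fD' : free (D ++ [:: a]).
  by rewrite (perm_free (permEl (perm_catC D [:: a]))) /= free_cons naD.
have [C [C1 C2 C3 C4]] := IH _ fD'.
exists (a :: C); rewrite -cat1s catA; split => //.
- by move=> c; rewrite inE => /orP[/eqP->|/C1 cs]; rewrite inE ?eqxx // cs orbT.
- move=> v; rewrite inE => /orP[/eqP->|/C3//].
  by apply: memv_span; rewrite !mem_cat inE eqxx orbT.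
- move=> c; rewrite inE => /orP[/eqP->//|/C4]; apply: contra.
  by apply: (subvP (sub_span _)) => w wD; rewrite mem_cat wD.
Qed.
End Gen.


Local Open Scope ring_scope.
Local Open Scope fset_scope.
Local Open Scope ring_scope.

Lemma sum_seq_fset (R : realType) (n : nat) (s : seq 'rV[R]_n) (F : 'rV[R]_n -> 'rV[R]_n) :
  uniq s -> \sum_(a <- seq_fset tt s) F a = \sum_(a <- s) F a.
Proof. by move=> us; apply: perm_big; rewrite -{2}(undup_id us) seq_fset_perm. Qed.

Lemma sumR_seq_fset (R : realType) (n : nat) (s : seq 'rV[R]_n) (F : 'rV[R]_n -> R) :
  uniq s -> \sum_(a <- seq_fset tt s) F a = \sum_(a <- s) F a.
Proof. by move=> us; apply: perm_big; rewrite -{2}(undup_id us) seq_fset_perm. Qed.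

Lemma Kp (R : realType) (n : nat) (X : {fset 'rV[R]_n})
  (hgood : forall A : {fset 'rV[R]_n}, A `<=` X -> #|` A| = n.+1 -> good_position A)
  (hspan : (<<X>> = fullv)%VS)
  (x xi xj : 'rV[R]_n) (a b : R) (B : seq 'rV[R]_n) (c : 'rV[R]_n -> R) :
  x \in X -> xj \in X -> {subset B <= X} -> 0 < a -> 0 < b ->
  x = a *: xi + b *: xj -> free (xj :: B) -> x \notin xj :: B ->
  xi = \sum_(v <- B) c v *: v ->
  (exists2 v, v \in B & 0 < c v) -> (exists2 v, v \in B & c v < 0) -> False.
Proof.
move=> xX xjX BX a0 b0 xE fD xD xiE [vp vpB cvp] [vn vnB cvn].
set D := xj :: B.
have [C [C1 C2 C3 C4]] := extend_free (X : seq _) fD.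
set D' := D ++ C.
have uD' : uniq D' := free_uniq C2.
have uD'' := uD'; rewrite /D' /D cat_cons cons_uniq cat_uniq mem_cat negb_or in uD''.
case/andP: uD'' => /andP[xjB xjC] /and3P[uB BC uC].
pose coef d := if d == xj then b else if d \in B then a * c d else 0.
have xE' : x = \sum_(d <- D') coef d *: d.
  rewrite /D' /D cat_cons big_cons big_cat /= /coef eqxx xE [RHS]addrC; congr (_ + _).
  rewrite [X in _ = X + _](eq_big_seq (fun d => (a * c d) *: d)); last first.
    by move=> d dB; rewrite dB; case: eqP => // e; rewrite -e dB in xjB.
  rewrite [X in _ = _ + X]big1_seq ?addr0; last first.
    move=> d /andP[_ dC]; case: eqP => [e|_]; first by rewrite -e dC in xjC.
    by case: ifP => [dB|_]; [have := hasPn BC d dC; rewrite dB | rewrite scale0r].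
  by rewrite xiE scaler_sumr; apply: eq_bigr => d _; rewrite scalerA.
have xspan : x \in <<D>>%VS.
  rewrite xE memvD // memvZ //; last by apply: memv_span; rewrite inE eqxx.
  rewrite xiE big_seq; apply: memv_suml => v vB; rewrite memvZ //.
  by apply: memv_span; rewrite inE vB orbT.
have xD' : x \notin D'.
  rewrite mem_cat negb_or xD /=; apply/negP => /C4; by rewrite xspan.
set s := x :: D'.
have us : uniq s by rewrite /s cons_uniq xD' uD'.
set A := seq_fset tt s.
have memA v : (v \in A) = (v \in s) by rewrite seq_fsetE.
have AX : A `<=` X.
  apply/fsubsetP => v; rewrite memA inE => /orP[/eqP->//|].
  rewrite mem_cat => /orP[|/C1//]; rewrite inE => /orP[/eqP->//|/BX//].
have sD' : size D' = n.
  have fullD : (<<D'>> = fullv)%VS.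
    apply/eqP; rewrite eqEsubv subvf /= -hspan; apply/span_subvP => v vX.
    exact: C3.
  by rewrite -(eqnP C2) fullD dimvf /dim /= mul1n.
have cardA : #|` A| = n.+1.
  by rewrite /A size_seq_fset undup_id //; apply: (congr1 S).
have expand (mu : 'rV[R]_n -> R) : \sum_(v <- A) mu v *: v = 0 ->
    forall d, d \in D' -> mu d + mu x * coef d = 0.
  rewrite sum_seq_fset // /s big_cons [X in mu x *: X]xE' scaler_sumr -big_split /= => H.
  apply: (rel0 C2); rewrite -[RHS]H; apply: eq_bigr => d _.
  by rewrite scalerDl scalerA addrC.
have xjD' : xj \in D' by rewrite mem_cat inE eqxx.
have BD' v : v \in B -> v \in D' by move=> vB; rewrite mem_cat inE vB orbT.
have coefB v : v \in B -> coef v = a * c v.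
  by move=> vB; rewrite /coef vB; case: eqP => // e; rewrite -e vB in xjB.
have coefxj : coef xj = b by rewrite /coef eqxx.
have xnB v : v \in B -> v != x.
  by move=> vB; apply: contraNneq xD => <-; rewrite inE vB orbT.
have xnxj : xj != x by apply: contraNneq xD => <-; rewrite inE eqxx.
apply: (hgood A AX cardA); split.
  move=> [w [w0 [w1 w2]]].
  have hx := expand w (esym w2).
  have wx0 : w x = 0.
    have := hx xj xjD'; rewrite coefxj => /eqP.
    rewrite paddr_eq0 ?w0 ?mulr_ge0 ?w0 ?memA ?inE ?eqxx ?xjD' ?orbT ?(ltW b0) //.
    by case/andP => _; rewrite mulf_eq0 (gt_eqF b0) orbF => /eqP.
  move: w1; rewrite sumR_seq_fset // /s big_cons wx0 add0r big1_seq.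
    by move/eqP; rewrite eq_sym oner_eq0.
  by move=> d /andP[_ dD']; have := hx d dD'; rewrite wx0 mul0r addr0.
move=> a1 a1A [w [w0 w1]].
pose mu v := if v == a1 then -1 else w v.
have mupos v : v \in s -> v != a1 -> 0 <= mu v.
  move=> vs va; rewrite /mu (negPf va); apply: w0.
  by rewrite in_fsetD1 va memA vs.
have H : \sum_(v <- A) mu v *: v = 0.
  rewrite (big_fsetD1 a1) //= /mu eqxx scaleN1r.
  rewrite (eq_big_seq (fun v => w v *: v)) -?w1 ?addNr //.
  by move=> v; rewrite in_fsetD1 => /andP[/negPf-> _].
have hx := expand mu H.
have a1s : a1 \in s by rewrite -memA.
have [ex|nx] := eqVneq a1 x.
  have mv : 0 <= mu vn.
    apply: mupos; first by rewrite inE BD' ?orbT.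
    by rewrite ex xnB.
  have := hx vn (BD' _ vnB); rewrite coefB //.
  have -> : mu x = -1 by rewrite /mu ex eqxx.
  move/eqP; rewrite mulN1r subr_eq0 => /eqP e.
  by move: mv; rewrite e pmulr_rge0 // leNgt cvn.
have mux : 0 <= mu x by apply: mupos; rewrite ?inE ?eqxx // eq_sym.
have := hx xj xjD'; rewrite coefxj.
have [exj|nxj] := eqVneq a1 xj.
  have -> : mu xj = -1 by rewrite /mu exj eqxx.
  move=> /eqP; rewrite addrC subr_eq0 => /eqP e.
  have mxp : 0 < mu x.
    rewrite lt0r mux andbT; apply/negP => /eqP m0.
    by move: e; rewrite m0 mul0r => /eqP; rewrite eq_sym oner_eq0.
  have := hx vp (BD' _ vpB); rewrite coefB //.
  have mv : 0 <= mu vp.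
    apply: mupos; first by rewrite inE BD' ?orbT.
    by rewrite exj; apply: contraNneq xjB => <-.
  move/eqP; rewrite paddr_eq0 // ?mulr_ge0 ?mulr_ge0 ?(ltW a0) ?(ltW mxp) ?(ltW cvp) //.
  by case/andP=> _; rewrite !mulf_eq0 (gt_eqF mxp) (gt_eqF a0) (gt_eqF cvp).
have muxj : 0 <= mu xj.
  by apply: mupos; [rewrite inE xjD' orbT | rewrite eq_sym].

move/eqP; rewrite paddr_eq0 // ?mulr_ge0 ?(ltW b0) // => /andP[_].
rewrite mulf_eq0 (gt_eqF b0) orbF => /eqP mx0.
have a1D' : a1 \in D' by move: a1s; rewrite inE (negPf nx).
have := hx a1 a1D'; have -> : mu a1 = -1 by rewrite /mu eqxx.
rewrite mx0 mul0r addr0 => /eqP.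
by rewrite oppr_eq0 oner_eq0.
Qed.


Local Open Scope fset_scope.
Local Open Scope ring_scope.

Section Vec.
Variables (R : realType) (n : nat) (Xi : {fset 'rV[R]_n}).
Hypothesis hsum : \sum_(e <- Xi) e = 0.
Hypothesis haff : affinely_independent Xi.

Definition vec (f : 'rV[R]_n -> R) := \sum_(e <- Xi) f e *: e.

Lemma sum_const_seq (s : seq 'rV[R]_n) (t : R) : \sum_(e <- s) t = t *+ size s.
Proof. by elim: s => [|a s IH]; rewrite ?big_nil ?big_cons ?IH ?mulrS. Qed.

Lemma vec_const f e1 e2 : vec f = 0 -> e1 \in Xi -> e2 \in Xi -> f e1 = f e2.
Proof.
move=> H e1X e2X.
set N := size (Xi : seq _).
have N0 : N%:R != 0 :> R.
  by rewrite pnatr_eq0 -lt0n /N cardfs_gt0; apply/fset0Pn; exists e1.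
set t := (\sum_(e <- Xi) f e) / N%:R.
have s1 : \sum_(e <- Xi) (f e - t) = 0.
  rewrite sumrB sum_const_seq -/N -mulr_natr /t divfK //. exact (subrr _).
have s2 : \sum_(e <- Xi) (f e - t) *: e = 0.
  rewrite (eq_bigr (fun e => f e *: e - t *: e)); last by move=> e' _; rewrite scalerBl.
  by rewrite sumrB -scaler_sumr hsum scaler0 subr0.
have ht (e : 'rV[R]_n) : e \in Xi -> f e - t = 0.
  move=> eX; exact (haff s1 s2 eX).
by move: (ht e1 e1X) (ht e2 e2X) => /eqP; rewrite subr_eq0 => /eqP-> /eqP; rewrite subr_eq0 => /eqP->.
Qed.

Lemma vecB f g : vec (fun e => f e - g e) = vec f - vec g.
Proof. by rewrite /vec -sumrB; apply: eq_bigr => e _; rewrite scalerBl. Qed.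

Lemma vecD f g : vec (fun e => f e + g e) = vec f + vec g.
Proof. by rewrite /vec -big_split; apply: eq_bigr => e _; rewrite scalerDl. Qed.

Lemma vecZ c f : vec (fun e => c * f e) = c *: vec f.
Proof. by rewrite /vec scaler_sumr; apply: eq_bigr => e _; rewrite scalerA. Qed.

Lemma vec_eqE f g e1 e2 : vec f = vec g -> e1 \in Xi -> e2 \in Xi ->
  f e1 - g e1 = f e2 - g e2.
Proof. move=> H e1X e2X; apply: (@vec_const (fun e => f e - g e)) => //; by rewrite vecB H subrr. Qed.

Lemma vec_eq f g t : (forall e, e \in Xi -> f e = g e + t) -> vec f = vec g.
Proof.
move=> H; rewrite /vec (eq_big_seq (fun e => g e *: e + t *: e)).
  by rewrite big_split /= -scaler_sumr hsum scaler0 addr0.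
by move=> e eX; rewrite H // scalerDl.
Qed.

Lemma vec_pt e0 : e0 \in Xi -> vec (fun e => (e == e0)%:R) = e0.
Proof.
move=> e0X; rewrite /vec (big_fsetD1 e0) //= eqxx scale1r big1_seq ?addr0 //.
by move=> e /andP[_]; rewrite in_fsetD1 => /andP[/negPf-> _]; rewrite scale0r.
Qed.

Lemma sub_vec (S : {fset 'rV[R]_n}) (F : 'rV[R]_n -> R) : S `<=` Xi ->
  \sum_(e <- S) F e *: e = vec (fun e => if e \in S then F e else 0).
Proof.
move=> SX; rewrite /vec -(big_fset_incl _ SX); last first.
  by move=> e _ /negPf->; rewrite scale0r.
by apply: eq_big_seq => e ->.
Qed.

Lemma vec_span f : vec f \in <<Xi>>%VS.
Proof.
rewrite /vec big_seq; apply: memv_suml => e eX; rewrite memvZ //.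
exact: memv_span.
Qed.
End Vec.


Local Open Scope fset_scope.
Local Open Scope ring_scope.

Section L.
Variables (R : realType) (n : nat) (X : {fset 'rV[R]_n}).
Hypothesis hgood : forall A : {fset 'rV[R]_n}, A `<=` X -> #|` A| = n.+1 -> good_position A.
Hypothesis hspan : (<<X>> = fullv)%VS.
Variables (x xi xj : 'rV[R]_n) (a b : R) (Xi : {fset 'rV[R]_n}).
Hypothesis hsum : \sum_(e <- Xi) e = 0.
Hypothesis haff : affinely_independent Xi.
Hypothesis hXiX : Xi `<=` X.
Hypothesis xiXi : xi \in Xi.
Hypothesis xjX : xj \in X.
Hypothesis xjn : xj \notin <<Xi>>%VS.
Hypothesis xX : x \in X.
Hypothesis xnXi : x \notin <<Xi>>%VS.
Hypothesis xnxj : x != xj.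
Hypothesis hx : x = a *: xi + b *: xj.
Hypothesis a0 : 0 < a.
Hypothesis b0 : 0 < b.

Lemma K2 (B : seq 'rV[R]_n) (c : 'rV[R]_n -> R) : free B -> {subset B <= X} ->
  {subset B <= <<Xi>>%VS} -> xi = \sum_(v <- B) c v *: v ->
  (exists2 v, v \in B & 0 < c v) -> (exists2 v, v \in B & c v < 0) -> False.
Proof.
move=> fB BX BXi xiE P N.
apply: (Kp hgood hspan xX xjX BX a0 b0 hx _ _ xiE P N).
  have sB : (<<B>> <= <<Xi>>)%VS by apply/span_subvP.
  rewrite free_cons fB andbT; apply: contra xjn; exact: (subvP sB).
rewrite inE negb_or xnxj /=; apply/negP => /BXi; by rewrite (negPf xnXi).
Qed.

Lemma XiX v : v \in Xi -> v \in X.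
Proof. by move=> vXi; apply: (fsubsetP hXiX). Qed.

Lemma L (lam : 'rV[R]_n -> R) (y r e : 'rV[R]_n) : y \in X -> y = vec Xi lam ->
  r \in Xi -> e \in Xi -> e != xi -> e != r -> lam r != lam xi -> lam r < lam e -> False.
Proof.
move=> yX yE rXi eXi exi er lrxi lre.
set Rs := Xi `\` [fset xi; r].
have memR v : (v \in Rs) = [&& v != xi, v != r & v \in Xi].
  by rewrite /Rs in_fsetD !inE negb_or andbA.
have RXi : Rs `<=` Xi by apply/fsubsetP => v; rewrite memR => /and3P[].
have yR : y \notin Rs.
  apply/negP => yR; move: (yR); rewrite memR => /and3P[yxi yr yXi].
  have := @vec_eqE _ _ _ hsum haff lam (fun e => (e == y)%:R) xi r.
  rewrite vec_pt // -yE => /(_ erefl xiXi rXi).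
  rewrite eq_sym (negPf yxi) eq_sym (negPf yr) !subr0 => /eqP.
  by rewrite eq_sym (negPf lrxi).
have uB : uniq (y :: (Rs : seq _)) by rewrite /= yR fset_uniq.
have fB : free (y :: (Rs : seq _)).
  apply: free_rel => // mu; rewrite big_cons (sub_vec _ RXi) yE -vecZ -vecD => H.
  have Hc := @vec_const _ _ _ hsum haff _ xi r H xiXi rXi.
  have Rxi : xi \notin Rs by rewrite memR eqxx.
  have Rr : r \notin Rs by rewrite memR eqxx andbF.
  move: Hc; rewrite (negPf Rxi) (negPf Rr) !addr0 => /eqP.
  have lxr : lam xi != lam r by rewrite eq_sym.
  rewrite -subr_eq0 -mulrBr mulf_eq0 subr_eq0 (negPf lxr) orbF => /eqP mu0 v.
  rewrite inE => /orP[/eqP->//|vR].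
  have := @vec_const _ _ _ hsum haff _ v xi H (fsubsetP RXi v vR) xiXi.
  by rewrite mu0 !mul0r !add0r vR (negPf Rxi).
have eR : e \in Rs by rewrite memR exi er eXi.
have eny : e != y by apply: contraNneq yR => <-.
set d := lam xi - lam r.
have d0 : d != 0 by rewrite subr_eq0 eq_sym.
pose c v := if v == y then d^-1 else - (lam v - lam r) / d.
have RXi' v : v \in Rs -> v \in Xi by move/(fsubsetP RXi).
have BX : {subset (y :: (Rs : seq _)) <= X}.
  move=> v; rewrite inE => /orP[/eqP->//|/RXi'/XiX//].
have BXi : {subset (y :: (Rs : seq _)) <= <<Xi>>%VS}.
  move=> v; rewrite inE => /orP[/eqP->|/RXi' vXi]; last exact: memv_span.
  by rewrite yE vec_span.
have xiE : xi = \sum_(v <- y :: (Rs : seq _)) c v *: v.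
  rewrite big_cons /c eqxx (sub_vec _ RXi) {1}yE -vecZ -vecD -{1}(vec_pt xiXi).
  apply: esym; apply: (@vec_eq _ _ _ hsum _ _ (lam r / d)) => v vXi.
  have [->|vxi] := eqVneq v xi.
    rewrite memR eqxx /= addr0 /d; field; exact: d0.
  have [->|vr] := eqVneq v r.
    by rewrite memR eqxx /= andbF addr0 add0r mulrC.
  have vR : v \in Rs by rewrite memR vxi vr vXi.
  have vy : v != y by apply: contraNneq yR => <-.
  rewrite vR (negPf vy) add0r /d; field; exact: d0.
have le : 0 < lam e - lam r by rewrite subr_gt0.
have [dp|dn] : 0 < d \/ d < 0.
  by case: (ltgtP d 0) => h; [right|left|move: d0; rewrite h eqxx].
- apply: (K2 fB BX BXi xiE).
  + by exists y; rewrite ?inE ?eqxx // /c eqxx invr_gt0.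
  + exists e; first by rewrite inE eR orbT.
    by rewrite /c (negPf eny) mulNr oppr_lt0 divr_gt0.
- apply: (K2 fB BX BXi xiE).
  + exists e; first by rewrite inE eR orbT.
    by rewrite /c (negPf eny) mulNr oppr_gt0 pmulr_rlt0 // invr_lt0.
  + by exists y; rewrite ?inE ?eqxx // /c eqxx invr_lt0.
Qed.

Lemma L2 (p q : 'rV[R]_n) (al be : R) (P Q : {fset 'rV[R]_n}) (s t u : 'rV[R]_n) :
  p \in X -> q \in X -> 0 < al -> 0 < be -> P `<=` Xi -> Q `<=` Xi ->
  p = al *: \sum_(e <- P) e -> q = be *: \sum_(e <- Q) e ->
  xi \notin P -> xi \notin Q -> s \in P -> s \notin Q -> t \in Q -> t \notin P ->
  u \in P -> u \in Q -> False.
Proof.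
move=> pX qX al0 be0 PXi QXi pE0 qE0 xiP xiQ sP sQ tQ tP uP uQ.
pose ind (A : {fset 'rV[R]_n}) v : R := if v \in A then 1 else 0.
have indE (A : {fset 'rV[R]_n}) : A `<=` Xi -> \sum_(e <- A) e = vec Xi (ind A).
  move=> AXi; rewrite -(sub_vec _ AXi); apply: eq_bigr => e _; by rewrite scale1r.
have pE : p = vec Xi (fun v => al * ind P v) by rewrite vecZ -indE.
have qE : q = vec Xi (fun v => be * ind Q v) by rewrite vecZ -indE.
set Rs := Xi `\` [fset xi; s; t].
have memR v : (v \in Rs) = [&& v != xi, v != s, v != t & v \in Xi].
  by rewrite /Rs in_fsetD !inE !negb_or -!andbA.
have RXi : Rs `<=` Xi by apply/fsubsetP => v; rewrite memR => /and4P[].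
have RXi' v : v \in Rs -> v \in Xi by move/(fsubsetP RXi).
have sXi : s \in Xi by apply: (fsubsetP PXi).
have tXi : t \in Xi by apply: (fsubsetP QXi).
have uXi : u \in Xi by apply: (fsubsetP PXi).
have sxi : s != xi by apply: contraNneq xiP => <-.
have txi : t != xi by apply: contraNneq xiQ => <-.
have st : s != t by apply: contraNneq sQ => ->.
have uR : u \in Rs.
  rewrite memR uXi andbT; apply/and3P; split.
  - by apply: contraNneq xiP => <-.
  - by apply: contraNneq sQ => <-.
  - by apply: contraNneq tP => <-.
have iPxi : ind P xi = 0 by rewrite /ind (negPf xiP).
have iQxi : ind Q xi = 0 by rewrite /ind (negPf xiQ).
have iPs : ind P s = 1 by rewrite /ind sP.
have iQs : ind Q s = 0 by rewrite /ind (negPf sQ).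
have iPt : ind P t = 0 by rewrite /ind (negPf tP).
have iQt : ind Q t = 1 by rewrite /ind tQ.
have iPu : ind P u = 1 by rewrite /ind uP.
have iQu : ind Q u = 1 by rewrite /ind uQ.
have Rxi : xi \notin Rs by rewrite memR eqxx.
have Rs' : s \notin Rs by rewrite memR eqxx andbF.
have Rt : t \notin Rs by rewrite memR eqxx !andbF.
have pR : p \notin Rs.
  apply/negP => pR; move: (pR); rewrite memR => /and4P[pxi ps _ _].
  have H1 : vec Xi (fun v => al * ind P v) = vec Xi (fun e => (e == p)%:R).
    by rewrite (vec_pt (RXi' _ pR)); exact: esym pE.
  have := @vec_eqE _ _ _ hsum haff _ _ xi s H1 xiXi sXi.
  rewrite eq_sym (negPf pxi) eq_sym (negPf ps) !subr0 iPxi iPs mulr0 mulr1 => /eqP.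
  by rewrite eq_sym (gt_eqF al0).
have qR : q \notin Rs.
  apply/negP => qR; move: (qR); rewrite memR => /and4P[qxi _ qt _].
  have H1 : vec Xi (fun v => be * ind Q v) = vec Xi (fun e => (e == q)%:R).
    by rewrite (vec_pt (RXi' _ qR)); exact: esym qE.
  have := @vec_eqE _ _ _ hsum haff _ _ xi t H1 xiXi tXi.
  rewrite eq_sym (negPf qxi) eq_sym (negPf qt) !subr0 iQxi iQt mulr0 mulr1 => /eqP.
  by rewrite eq_sym (gt_eqF be0).
have pq : p != q.
  apply/negP => /eqP epq.
  have H1 : vec Xi (fun v => al * ind P v) = vec Xi (fun v => be * ind Q v).
    by rewrite -[LHS]pE -[RHS]qE.
  have := @vec_eqE _ _ _ hsum haff _ _ xi s H1 xiXi sXi.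
  rewrite iPxi iPs iQxi iQs !mulr0 mulr1 subr0 => /eqP.
  by rewrite subr0 eq_sym (gt_eqF al0).
have uB : uniq (p :: q :: (Rs : seq _)).
  by rewrite /= inE negb_or pq pR qR fset_uniq.
have fB : free (p :: q :: (Rs : seq _)).
  apply: free_rel => // mu; rewrite !big_cons (sub_vec _ RXi) [X in mu p *: X]pE [X in mu q *: X]qE.
  rewrite -!vecZ -!vecD => H.
  have Hs := @vec_const _ _ _ hsum haff _ s xi H sXi xiXi.
  have Ht := @vec_const _ _ _ hsum haff _ t xi H tXi xiXi.
  move: Hs Ht; rewrite iPxi iQxi iPs iQs iPt iQt (negPf Rs') (negPf Rt) (negPf Rxi).
  rewrite !mulr0 !mulr1 !addr0 !add0r => /eqP; rewrite mulf_eq0 (gt_eqF al0) orbF.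
  move=> /eqP mp /eqP; rewrite mulf_eq0 (gt_eqF be0) orbF => /eqP mq.
  move=> v; rewrite inE => /orP[/eqP->//|]; rewrite inE => /orP[/eqP->//|vR].
  have := @vec_const _ _ _ hsum haff _ v xi H (RXi' _ vR) xiXi.
  by rewrite mp mq !mul0r !add0r vR (negPf Rxi).
pose c v := if v == p then - al^-1 else if v == q then - be^-1 else ind P v + ind Q v - 1.
have BX : {subset (p :: q :: (Rs : seq _)) <= X}.
  move=> v; rewrite inE => /orP[/eqP->//|]; rewrite inE => /orP[/eqP->//|/RXi'/XiX//].
have BXi : {subset (p :: q :: (Rs : seq _)) <= <<Xi>>%VS}.
  move=> v; rewrite inE => /orP[/eqP->|]; first by rewrite pE vec_span.
  rewrite inE => /orP[/eqP->|/RXi' vXi]; last exact: memv_span.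
  by rewrite qE vec_span.
have xiE : xi = \sum_(v <- p :: q :: (Rs : seq _)) c v *: v.
  rewrite !big_cons /c eqxx eq_sym (negPf pq) eqxx (sub_vec _ RXi) [X in - al^-1 *: X]pE [X in - be^-1 *: X]qE.
  rewrite -!vecZ -!vecD -{1}(vec_pt xiXi).
  apply: esym; apply: (@vec_eq _ _ _ hsum _ _ (-1)) => v vXi.
  have [->|vxi] := eqVneq v xi.
    by rewrite iPxi iQxi (negPf Rxi) !mulr0 !addr0 subrr.
  have [->|vs] := eqVneq v s.
    rewrite iPs iQs (negPf Rs') addr0 /=; field; by rewrite ?gt_eqF.
  have [->|vt] := eqVneq v t.
    rewrite iPt iQt (negPf Rt) addr0 /=; field; by rewrite ?gt_eqF.
  have vR : v \in Rs by rewrite memR vxi vs vt vXi.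
  have vp : v != p by apply: contraNneq pR => <-.
  have vq : v != q by apply: contraNneq qR => <-.
  rewrite vR (negPf vp) (negPf vq) add0r.
  rewrite /=; field; by rewrite ?gt_eqF.
apply: (K2 fB BX BXi xiE).
  exists u; first by rewrite inE [u \in q :: _]inE uR !orbT.
  have up : u != p by apply: contraNneq pR => <-.
  have uq : u != q by apply: contraNneq qR => <-.
  by rewrite /c (negPf up) (negPf uq) iPu iQu addrK ltr01.
exists p; first by rewrite inE eqxx.
by rewrite /c eqxx oppr_lt0 invr_gt0.
Qed.
End L.


Local Open Scope ring_scope.
Local Open Scope fset_scope.

Lemma seq_min (R : realType) (n : nat) (s : seq 'rV[R]_n) (f : 'rV[R]_n -> R) x0 :
  x0 \in s -> exists2 m, m \in s & forall v, v \in s -> f m <= f v.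
Proof.
elim: s x0 => // a s IH x0 _.
case: s IH => [|b s] IH.
  by exists a; rewrite ?inE ?eqxx // => v; rewrite inE => /eqP->.
have [m ms mmin] := IH b (mem_head _ _).
have [le|lt] := leP (f a) (f m).
  exists a; first exact: mem_head.
  move=> v; rewrite inE => /orP[/eqP->//|/mmin]; exact: le_trans.
exists m; first by rewrite inE ms orbT.
move=> v; rewrite inE => /orP[/eqP->|/mmin//]; exact: ltW.
Qed.

Section Parts.
Local Open Scope ring_scope.
Variables (R : realType) (n : nat) (X Xi : {fset 'rV[R]_n}) (xi : 'rV[R]_n).
Hypothesis X0 : 0 \notin X.
Hypothesis hsum : \sum_(e <- Xi) e = 0.
Hypothesis LL : forall (lam : 'rV[R]_n -> R) (y r e : 'rV[R]_n), y \in X -> y = vec Xi lam ->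
  r \in Xi -> e \in Xi -> e != xi -> e != r -> lam r != lam xi -> lam r < lam e -> False.
Hypothesis LL2 : forall (p q : 'rV[R]_n) (al be : R) (P Q : {fset 'rV[R]_n}) (s t u : 'rV[R]_n),
  p \in X -> q \in X -> 0 < al -> 0 < be -> P `<=` Xi -> Q `<=` Xi ->
  p = al *: \sum_(e <- P) e -> q = be *: \sum_(e <- Q) e ->
  xi \notin P -> xi \notin Q -> s \in P -> s \notin Q -> t \in Q -> t \notin P ->
  u \in P -> u \in Q -> False.

Lemma sumD1 (A : {fset 'rV[R]_n}) a (F : 'rV[R]_n -> 'rV[R]_n) : a \in A ->
  \sum_(v <- A) F v = F a + \sum_(v <- A `\ a) F v.
Proof. by move=> aA; rewrite (big_fsetD1 a). Qed.

Lemma nonempty_supp y (S : {fset 'rV[R]_n}) (w : 'rV[R]_n -> R) : y \in X -> y = \sum_(v <- S) w v *: v -> exists s0, s0 \in S.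
Proof.
move=> yX wE; have [S0|[s0 s0S]] := fset_0Vmem S; last by exists s0.
by move: yX; rewrite wE S0 big_seq_fset0 (negPf X0).
Qed.

Lemma supp_data y (S : {fset 'rV[R]_n}) : y \in X -> is_support Xi y S ->
  exists w : 'rV[R]_n -> R, [/\ forall v, v \in S -> 0 < w v,
    y = \sum_(v <- S) w v *: v & exists2 z, z \in Xi & z \notin S].
Proof.
move=> yX [SXi [w [w0 wE]] mini].
have drop (w' : 'rV[R]_n -> R) e : (forall v, v \in S -> 0 <= w' v) ->
    y = \sum_(v <- S) w' v *: v -> e \in S -> w' e = 0 -> False.
  move=> w'0 w'E eS we0; apply: (mini (S `\ e) (fproperD1 eS)); exists w'; split.
    by move=> v; rewrite in_fsetD1 => /andP[_ /w'0].
  by rewrite w'E (sumD1 _ eS) we0 scale0r add0r.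
have wpos v : v \in S -> 0 < w v.
  move=> vS; rewrite lt0r w0 // andbT; apply/negP => /eqP wv0.
  exact: (drop w v w0 wE vS wv0).
exists w; split => //.
case: (pselect (exists2 z, z \in Xi & z \notin S)) => // hz; exfalso.
have SXi' : S = Xi.
  apply/eqP; rewrite eqEfsubset SXi; apply/fsubsetP => v vXi.
  case: (boolP (v \in S)) => // vS; exfalso; apply: hz; by exists v.
have [s0 s0S] := nonempty_supp yX wE.
have [m mS mmin] := seq_min w s0S.
apply: (drop (fun v => w v - w m) m) => //.
- by move=> v vS; rewrite subr_ge0 mmin.
- rewrite (eq_bigr (fun v => w v *: v - w m *: v)); last by move=> v _; rewrite scalerBl.
  by rewrite sumrB -scaler_sumr SXi' hsum scaler0 subr0 -SXi'.
- exact: subrr.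
Qed.

Lemma xi_supp y (S : {fset 'rV[R]_n}) (w : 'rV[R]_n -> R) z e : y \in X -> S `<=` Xi -> (forall v, v \in S -> 0 < w v) ->
  y = \sum_(v <- S) w v *: v -> z \in Xi -> z \notin S ->
  xi \in S -> e \in S -> e != xi -> False.
Proof.
move=> yX SXi wpos wE zXi zS xiS eS exi.
pose lam v := if v \in S then w v else 0.
have yE : y = vec Xi lam by rewrite wE (sub_vec _ SXi).
apply: (LL yX yE zXi (fsubsetP SXi _ eS) exi).
- by apply: contraNneq zS => <-.
- by rewrite /lam (negPf zS) xiS eq_sym gt_eqF // wpos.
- by rewrite /lam (negPf zS) eS wpos.
Qed.

Lemma part1 y (S : {fset 'rV[R]_n}) : y \in X -> is_support Xi y S ->
  exists c : R, 0 < c /\ y = c *: \sum_(e <- S) e.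
Proof.
move=> yX hS; have SXi : S `<=` Xi by case: hS.
have [w [wpos wE [z zXi zS]]] := supp_data yX hS.
have [s0 s0S] := nonempty_supp yX wE.
pose lam v := if v \in S then w v else 0.
have yE : y = vec Xi lam by rewrite wE (sub_vec _ SXi).
have lamS v : v \in S -> lam v = w v by rewrite /lam => ->.
have lamz : lam z = 0 by rewrite /lam (negPf zS).
have key s1 s2 : s1 \in S -> s2 \in S -> w s1 < w s2 -> False.
  move=> s1S s2S lt12.
  have s1Xi := fsubsetP SXi _ s1S; have s2Xi := fsubsetP SXi _ s2S.
  have s12 : s1 != s2 by apply: contraTneq lt12 => ->; rewrite ltxx.
  have s1z : s1 != z by apply: contraNneq zS => <-.
  have s2z : s2 != z by apply: contraNneq zS => <-.
  have w1 := wpos _ s1S; have w2 := wpos _ s2S.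
  case: (eqVneq xi s2) => [xs2|xs2].
    apply: (LL yX yE zXi s1Xi) => //.
    - by rewrite xs2.
    - by rewrite lamz xs2 lamS // eq_sym gt_eqF.
    - by rewrite lamz lamS.
  case: (eqVneq (lam xi) (w s1)) => [lx|lx].
    apply: (LL yX yE zXi s2Xi) => //.
    - by rewrite eq_sym.
    - by rewrite lamz lx eq_sym gt_eqF.
    - by rewrite lamz lamS.
  apply: (LL yX yE s1Xi s2Xi) => //.
  - by rewrite eq_sym.
  - by rewrite eq_sym.
  - by rewrite lamS // eq_sym.
  - by rewrite !lamS.
case: (pselect (forall v, v \in S -> w v = w s0)) => [hc|hnc].
  exists (w s0); split; first exact: wpos.
  by rewrite wE scaler_sumr; apply: eq_big_seq => v vS; rewrite hc.
exfalso.
have [v vS wv] : exists2 v, v \in S & w v != w s0.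
  case: (pselect (exists2 v, v \in S & w v != w s0)) => // h; exfalso; apply: hnc.
  move=> v vS; case: (eqVneq (w v) (w s0)) => // nv; exfalso; apply: h; by exists v.
case/orP: (lt_total wv) => lt.
  exact: (key v s0).
exact: (key s0 v).
Qed.

Lemma part2 p q (Sp Sq : {fset 'rV[R]_n}) : p \in X -> q \in X -> is_support Xi p Sp -> is_support Xi q Sq ->
  [\/ [disjoint Sp & Sq]%fset, Sp `<=` Sq | Sq `<=` Sp].
Proof.
move=> pX qX hp hq.
have SpXi : Sp `<=` Xi by case: hp.
have SqXi : Sq `<=` Xi by case: hq.
have [w1 [w1pos w1E [z1 z1Xi z1S]]] := supp_data pX hp.
have [w2 [w2pos w2E [z2 z2Xi z2S]]] := supp_data qX hq.
have [al [al0 pE]] := part1 pX hp.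
have [be [be0 qE]] := part1 qX hq.
case: (boolP [disjoint Sp & Sq]%fset) => [d|nd]; first by constructor 1.
case: (boolP (Sp `<=` Sq)) => [sub|/fsubsetPn [s sP sQ]]; first by constructor 2.
case: (boolP (Sq `<=` Sp)) => [sub|/fsubsetPn [t tQ tP]]; first by constructor 3.
exfalso.
have [u uP uQ] : exists2 u, u \in Sp & u \in Sq.
  move: nd; rewrite -fsetI_eq0 => /fset0Pn [u /fsetIP [uP uQ]]; by exists u.
have us : u != s by apply: contraTneq uQ => ->.
have ut : u != t by apply: contraTneq uP => ->; exact: tP.
case: (boolP (xi \in Sp)) => xiP.
  case: (eqVneq u xi) => [ux|ux].
    apply: (xi_supp pX SpXi w1pos w1E z1Xi z1S xiP sP).
    by rewrite -ux eq_sym.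
  exact: (xi_supp pX SpXi w1pos w1E z1Xi z1S xiP uP ux).
case: (boolP (xi \in Sq)) => xiQ.
  case: (eqVneq u xi) => [ux|ux].
    apply: (xi_supp qX SqXi w2pos w2E z2Xi z2S xiQ tQ).
    by rewrite -ux eq_sym.
  exact: (xi_supp qX SqXi w2pos w2E z2Xi z2S xiQ uQ ux).
exact: (LL2 pX qX al0 be0 SpXi SqXi pE qE xiP xiQ sP sQ tQ tP uP uQ).
Qed.
End Parts.

Theorem proposition5p5 (R : realType) (n : nat) (X : {fset 'rV[R]_n})
  (k : nat) (Xs : 'I_k -> {fset 'rV[R]_n})
  (hX : standing_setting X)
  (hsk : skeleton X Xs)
  (hscale : forall l, \sum_(e <- Xs l) e = 0)
  (x xi xj : 'rV[R]_n) (i j : 'I_k)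
  (hx : x \in X)
  (hxspan : forall l, x \notin <<Xs l>>%VS)
  (hij : i != j) (hxi : xi \in Xs i) (hxj : xj \in Xs j)
  (hxpos : pos [fset xi; xj] x) :
  (forall y, y \in X -> y \in <<Xs i>>%VS ->
     forall S, is_support (Xs i) y S ->
       exists c : R, 0 < c /\ y = c *: \sum_(e <- S) e) /\
  (forall p q, p \in X -> p \in <<Xs i>>%VS -> q \in X -> q \in <<Xs i>>%VS ->
     forall Sp Sq, is_support (Xs i) p Sp -> is_support (Xs i) q Sq ->
       [\/ [disjoint Sp & Sq], Sp `<=` Sq | Sq `<=` Sp]).
Proof.
case: hX => X0 _ _ hgood.
case: hsk => hsub _ hsimp hfull hdir.
have hsum := hscale i.
have haff : affinely_independent (Xs i) by case: (hsimp i).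
have hXiX := hsub i.
have hspan : (<<X>> = fullv)%VS.
  apply/eqP; rewrite eqEsubv subvf /= -hfull; apply/subv_sumP => l _.
  apply/span_subvP => v vXl; apply: memv_span; exact: (fsubsetP (hsub l)).
have nspan l m v : l != m -> v \in <<Xs l>>%VS -> v \in <<Xs m>>%VS -> v = 0.
  move=> lm vl vm; move/directv_sumP: hdir => /(_ m isT) H.
  apply/eqP; rewrite -memv0 -H memv_cap vm /=.
  exact: (subvP (sumv_sup l _ (subvv _))) vl.
have xjX : xj \in X by apply: (fsubsetP (hsub j)).
have xjn : xj \notin <<Xs i>>%VS.
  apply/negP => xjs; have ji : j != i by rewrite eq_sym.
  have e0 := nspan j i xj ji (memv_span hxj) xjs.
  by move: X0; rewrite -e0 xjX.
have xixj : xi != xj.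
  by apply: contraNneq xjn => <-; apply: memv_span.
case: hxpos => w [w0 wE].
rewrite big_fsetU1 ?inE // big_seq_fset1 in wE.
have {}wE : x = (w xi *: xi + w xj *: xj)%R := wE.
have xXi := hxspan i; have xXj := hxspan j.
have a0 : 0 < w xi.
  rewrite lt0r w0 ?inE ?eqxx // andbT; apply/negP => /eqP a0.
  by move: xXj; rewrite wE a0 scale0r add0r memvZ // memv_span.
have b0 : 0 < w xj.
  rewrite lt0r w0 ?inE ?eqxx ?orbT // andbT; apply/negP => /eqP b0.
  by move: xXi; rewrite wE b0 scale0r addr0 memvZ // memv_span.
have xnxj : x != xj by apply: contraNneq xXj => ->; apply: memv_span.
have LL := L hgood hspan hsum haff hXiX hxi xjX xjn hx xXi xnxj wE a0 b0.
have LL2 := L2 hgood hspan hsum haff hXiX hxi xjX xjn hx xXi xnxj wE a0 b0.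
split.
  move=> y yX _ S hS; exact: (part1 X0 hsum LL yX hS).
move=> p q pX _ qX _ Sp Sq hp hq; exact: (part2 X0 hsum LL LL2 pX qX hp hq).
Qed.
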